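(* Let $n\in\mathbb N$ and let $f$ be extremal for $M_n$ with $f(0)=e^{-t}$, $t>0$, written as $f(z)=\exp\big(-\sum_{j=1}^N\lambda_j\frac{1+\alpha_jz}{1-\alpha_jz}\big)$ with $\alpha_j=e^{-i\theta_j}$. Let $\varphi(\theta)=-i\lim_{r\to1^-}\log f(re^{i\theta})$ (logarithm real at $0$), defined for $\theta\notin\{\theta_1,\dots,\theta_N\}$, so that $f(e^{i\theta})=e^{i\varphi(\theta)}$ a.e. If $\mu_1,\dots,\mu_N$ denote the zeros of $\varphi$ in $[0,2\pi)$, then \[\varphi(\theta)=t\,\frac{\prod_{j=1}^N\sin\big(\frac{\theta-\mu_j}{2}\big)}{\prod_{j=1}^N\sin\big(\frac{\theta-\theta_j}{2}\big)}.\]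
   Context: $\mathbb D$ is the open unit disc; $\mathcal B_0=\{f$ holomorphic on $\mathbb D: 0<|f|\le1\}$; $M_n(f)=\mathrm{Re}\,a_n$; $f\in\mathcal B_0$ is extremal for $M_n$ if $M_n(f)\ge M_n(F)$ for all $F\in\mathcal B_0$. It is known that an extremal $f$ with $f(0)>0$ has the displayed form with $1\le N\le n$, $\lambda_j>0$, distinct $\alpha_j\in\partial\mathbb D$; explicitly $\varphi(\theta)=-\sum_{j=1}^N\lambda_j\cot\big(\frac{\theta-\theta_j}{2}\big)$, which has exactly $N$ zeros in $[0,2\pi)$. *)

(* Defs.v *)
From Stdlib Require Import Reals.
From Coquelicot Require Import Coquelicot.

Open Scope R_scope.

Notation CC := Complex.C.

Definition cexp (z : CC) : CC :=
  (exp (fst z) * cos (snd z), exp (fst z) * sin (snd z)).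

Fixpoint csum (N : nat) (g : nat -> CC) : CC :=
  match N with
  | O => RtoC 0
  | S k => Cplus (csum k g) (g k)
  end.

Fixpoint rprod (N : nat) (g : nat -> R) : R :=
  match N with
  | O => 1
  | S k => rprod k g * g k
  end.

Definition holo_disc (f : CC -> CC) : Prop :=
  forall z : CC, Cmod z < 1 -> @ex_derive C_AbsRing C_NormedModule f z.

Definition B0 (f : CC -> CC) : Prop :=
  holo_disc f /\ forall z : CC, Cmod z < 1 -> 0 < Cmod (f z) /\ Cmod (f z) <= 1.

Definition taylor_coeffs (f : CC -> CC) (a : nat -> CC) : Prop :=
  forall z : CC, Cmod z < 1 -> @is_pseries C_AbsRing C_NormedModule a z (f z).

(* M_n(f) = Re a_n ; f is extremal for M_n *)
Definition extremal (n : nat) (f : CC -> CC) : Prop :=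
  B0 f /\
  exists a : nat -> CC, taylor_coeffs f a /\
    forall (F : CC -> CC) (b : nat -> CC), B0 F -> taylor_coeffs F b ->
      fst (b n) <= fst (a n).

Definition alpha (theta : nat -> R) (j : nat) : CC := cexp (RtoC 0 - Ci * RtoC (theta j))%C.

(* the branch of log f that is real at 0:
   L(z) = - sum_j lambda_j (1 + alpha_j z)/(1 - alpha_j z) *)
Definition logf (N : nat) (lam theta : nat -> R) (z : CC) : CC :=
  (RtoC 0 - csum N (fun j => RtoC (lam j) *
       ((RtoC 1 + alpha theta j * z) / (RtoC 1 - alpha theta j * z))))%C.

Definition phi_is (N : nat) (lam theta : nat -> R) (th v : R) : Prop :=
  filterlim (fun r : R =>
      (RtoC 0 - Ci * logf N lam theta (RtoC r * cexp (Ci * RtoC th)))%C)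
    (at_left 1) (locally (RtoC v)).

(* Main.v *)
Require Import Defs.
From Stdlib Require Import Reals Lra Lia.
From Coquelicot Require Import Coquelicot.

Open Scope R_scope.

Fixpoint rsum (N : nat) (g : nat -> R) : R :=
  match N with O => 0 | S k => rsum k g + g k end.

Definition s2 (th a : R) := 2 * sin ((th - a) / 2).
Definition c2 (th a : R) := 2 * cos ((th - a) / 2).
Definition hm (th a : R) := - ((th + a) / 2).
Definition hp (th a : R) := (th + a) / 2.
Definition hd (a b : R) := (a - b) / 2.

Definition Pf N (lam theta : nat -> R) th :=
  - rsum N (fun j => lam j * c2 th (theta j) *
        rprod N (fun k => if Nat.eqb k j then 1 else s2 th (theta k))).
Definition Pm N (mu : nat -> R) th := rprod N (fun j => s2 th (mu j)).

Lemma sc_aux th a : exists u v, th = u + v /\ a = u - v /\ (th + a) / 2 = u /\ (th - a) / 2 = v.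
Proof. exists ((th + a) / 2), ((th - a) / 2). repeat split; field. Qed.

Lemma trig_s1 th a : cos (hm th a) * (cos th - cos a) - sin (hm th a) * (sin th - sin a) = 0.
Proof.
  unfold hm. destruct (sc_aux th a) as [u [v [E1 [E2 [E3 E4]]]]]. rewrite E3. subst th a.
  rewrite cos_neg, sin_neg, cos_plus, cos_minus, sin_plus, sin_minus. ring.
Qed.
Lemma trig_s2 th a : cos (hm th a) * (sin th - sin a) + sin (hm th a) * (cos th - cos a) = s2 th a.
Proof.
  unfold hm, s2. destruct (sc_aux th a) as [u [v [E1 [E2 [E3 E4]]]]]. rewrite E3, E4. subst th a.
  rewrite cos_neg, sin_neg, cos_plus, cos_minus, sin_plus, sin_minus.
  pose proof (sin2_cos2 u) as H. unfold Rsqr in H.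
  replace (2 * sin v) with (2 * sin v * (sin u * sin u + cos u * cos u)) by (rewrite H; ring). ring.
Qed.
Lemma trig_c1 th a : cos (hm th a) * (cos th + cos a) - sin (hm th a) * (sin th + sin a) = c2 th a.
Proof.
  unfold hm, c2. destruct (sc_aux th a) as [u [v [E1 [E2 [E3 E4]]]]]. rewrite E3, E4. subst th a.
  rewrite cos_neg, sin_neg, cos_plus, cos_minus, sin_plus, sin_minus.
  pose proof (sin2_cos2 u) as H. unfold Rsqr in H.
  replace (2 * cos v) with (2 * cos v * (sin u * sin u + cos u * cos u)) by (rewrite H; ring). ring.
Qed.
Lemma trig_c2 th a : cos (hm th a) * (sin th + sin a) + sin (hm th a) * (cos th + cos a) = 0.
Proof.
  unfold hm. destruct (sc_aux th a) as [u [v [E1 [E2 [E3 E4]]]]]. rewrite E3. subst th a.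
  rewrite cos_neg, sin_neg, cos_plus, cos_minus, sin_plus, sin_minus. ring.
Qed.
Lemma hm_hp th a : hm th a + hp th a = 0.
Proof. unfold hm, hp. ring. Qed.
Lemma hm_hp2 th a b : hm th a + hp th b = hd b a.
Proof. unfold hm, hp, hd. field. Qed.
Lemma cos_sin_not0 a : cos a = 0 -> sin a = 0 -> False.
Proof. intros Hc Hs. pose proof (sin2_cos2 a). rewrite Hc, Hs in H. unfold Rsqr in H. lra. Qed.

Lemma cexp_i th : cexp (Ci * RtoC th)%C = (cos th, sin th).
Proof.
  unfold cexp; simpl.
  replace (0 * th - 1 * 0) with 0 by ring.
  replace (0 * 0 + 1 * th) with th by ring.
  rewrite exp_0; f_equal; ring.
Qed.

Lemma alpha_eq theta j : alpha theta j = (cos (theta j), - sin (theta j)).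
Proof.
  unfold alpha, cexp; simpl.
  replace (0 + - (0 * theta j - 1 * 0)) with 0 by ring.
  replace (0 + - (0 * 0 + 1 * theta j)) with (- theta j) by ring.
  rewrite exp_0, cos_neg, sin_neg; f_equal; ring.
Qed.

Definition Dn (r x : R) := 1 - 2 * r * cos x + r * r.

Lemma term_eq lamj thj th r : Dn r (th - thj) <> 0 ->
  (RtoC lamj * ((RtoC 1 + cexp (RtoC 0 - Ci * RtoC thj) * (RtoC r * cexp (Ci * RtoC th)))
     / (RtoC 1 - cexp (RtoC 0 - Ci * RtoC thj) * (RtoC r * cexp (Ci * RtoC th)))))%C
  = (lamj * ((1 - r * r) / Dn r (th - thj)), lamj * (2 * r * sin (th - thj) / Dn r (th - thj))).
Proof.
  intro HD.
  change (cexp (RtoC 0 - Ci * RtoC thj)) with (alpha (fun _ => thj) O).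
  rewrite alpha_eq, cexp_i.
  assert (E : Cmult (cos thj, Ropp (sin thj)) (Cmult (RtoC r) (cos th, sin th)) = (r * cos (th - thj), r * sin (th - thj))).
  { rewrite cos_minus, sin_minus. unfold Cmult, RtoC; simpl. f_equal; ring. }
  rewrite E. clear E.
  unfold Dn in *.
  set (c := cos (th - thj)) in *. set (s := sin (th - thj)) in *.
  assert (Hcs : s * s + c * c = 1).
  { unfold s, c. pose proof (sin2_cos2 (th - thj)). unfold Rsqr in H. lra. }
  assert (Hd : (1 - r * c) ^ 2 + (0 - r * s) ^ 2 = 1 - 2 * r * c + r * r).
  { replace (r * r) with (r * r * (s * s + c * c)) by (rewrite Hcs; ring). ring. }
  unfold Cdiv, Cinv, Cminus, Cplus, Copp, Cmult, RtoC; simpl.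
  set (d := (1 + - (r*c)) * ((1 + - (r*c)) * 1) + (0 + - (r*s)) * ((0 + - (r*s)) * 1)).
  assert (Hdd : d = 1 - 2 * r * c + r * r) by (rewrite <- Hd; unfold d; ring).
  rewrite Hdd.
  replace (1 - r * r) with (1 - r * r * (s * s + c * c)) by (rewrite Hcs; ring).
  apply injective_projections; simpl; field; auto.
Qed.

Lemma csum_pair N g : csum N g = (rsum N (fun j => fst (g j)), rsum N (fun j => snd (g j))).
Proof. induction N; simpl; [reflexivity|]. rewrite IHN. reflexivity. Qed.

Lemma rsum_ext N f g : (forall j, (j < N)%nat -> f j = g j) -> rsum N f = rsum N g.
Proof. induction N; intros H; simpl; [reflexivity|]. rewrite IHN, H; auto. Qed.

Definition Af N (lam theta : nat -> R) th r :=
  - rsum N (fun j => lam j * (2 * r * sin (th - theta j) / Dn r (th - theta j))).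
Definition Bf N (lam theta : nat -> R) th r :=
  rsum N (fun j => lam j * ((1 - r * r) / Dn r (th - theta j))).

Lemma expr_eq N lam theta th r : (forall j, (j < N)%nat -> Dn r (th - theta j) <> 0) ->
  (RtoC 0 - Ci * logf N lam theta (RtoC r * cexp (Ci * RtoC th)))%C =
  (Af N lam theta th r, Bf N lam theta th r).
Proof.
  intro HD. unfold logf, alpha. rewrite csum_pair.
  unfold Af, Bf.
  rewrite (rsum_ext N _ (fun j => lam j * ((1 - r * r) / Dn r (th - theta j)))).
  2:{ intros j Hj. rewrite term_eq; auto. }
  rewrite (rsum_ext N (fun j => snd _) (fun j => lam j * (2 * r * sin (th - theta j) / Dn r (th - theta j)))).
  2:{ intros j Hj. rewrite term_eq; auto. }
  unfold Cminus, Cplus, Copp, Cmult, RtoC; simpl. f_equal; ring.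
Qed.

Lemma rsum_cont N (F : nat -> R -> R) x :
  (forall j, (j < N)%nat -> continuous (F j) x) -> continuous (fun r => rsum N (fun j => F j r)) x.
Proof.
  induction N; intros H; simpl.
  - apply continuous_const.
  - apply (continuous_plus (fun r => rsum N (fun j => F j r)) (F N)); auto.
Qed.

Lemma Dn_pos r x : 0 < r < 1 -> 0 < Dn r x.
Proof.
  intros Hr. unfold Dn. pose proof (COS_bound x). nra.
Qed.

Lemma lim_nonpole N lam theta th : (forall j, (j < N)%nat -> cos (th - theta j) <> 1) ->
  phi_is N lam theta th (Af N lam theta th 1).
Proof.
  intros Hnp. unfold phi_is.
  apply (filterlim_ext_loc (fun r => ((Af N lam theta th r, Bf N lam theta th r) : CC))).
  { exists (mkposreal 1 Rlt_0_1). intros y Hy Hlt. simpl in Hy.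
    change (Rabs (y - 1) < 1) in Hy. apply Rabs_def2 in Hy.
    symmetry. apply expr_eq. intros j Hj. apply Rgt_not_eq, Dn_pos. lra. }
  assert (HB1 : Bf N lam theta th 1 = 0).
  { unfold Bf. rewrite (rsum_ext N _ (fun _ => 0)).
    - clear. induction N; simpl; auto. rewrite IHN; ring.
    - intros j Hj. unfold Rdiv. ring. }
  assert (Hc : forall j, (j < N)%nat -> Dn 1 (th - theta j) <> 0).
  { intros j Hj. unfold Dn. specialize (Hnp j Hj). lra. }
  assert (HA : continuous (Af N lam theta th) 1).
  { unfold Af. apply (continuous_opp (fun r => rsum N (fun j => lam j * (2 * r * sin (th - theta j) / Dn r (th - theta j))))).
    apply (rsum_cont N (fun j r => lam j * (2 * r * sin (th - theta j) / Dn r (th - theta j)))).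
    intros j Hj. apply (@ex_derive_continuous R_AbsRing R_NormedModule). unfold Dn.
    specialize (Hc j Hj). unfold Dn in Hc. auto_derive. auto. }
  assert (HB : continuous (Bf N lam theta th) 1).
  { unfold Bf.
    apply (rsum_cont N (fun j r => lam j * ((1 - r * r) / Dn r (th - theta j)))).
    intros j Hj. apply (@ex_derive_continuous R_AbsRing R_NormedModule). unfold Dn.
    specialize (Hc j Hj). unfold Dn in Hc. auto_derive. auto. }
  apply (filterlim_filter_le_1 (F := locally 1)).
  { apply filter_le_within. }
  apply filterlim_locally. intros eps.
  apply filterlim_locally with (eps := eps) in HA.
  apply filterlim_locally with (eps := eps) in HB.
  generalize (filter_and _ _ HA HB). apply filter_imp.
  intros r [H1 H2]. rewrite HB1 in H2. split; assumption.
Qed.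

Lemma rsum_ge_term N f k : (forall j, (j < N)%nat -> 0 <= f j) -> (k < N)%nat -> f k <= rsum N f.
Proof.
  induction N; intros H Hk; [lia|]. simpl.
  assert (0 <= rsum N f).
  { clear - H. induction N; simpl; [lra|]. 
    assert (0 <= f N) by (apply H; lia). assert (0 <= rsum N f) by (apply IHN; intros; apply H; lia). lra. }
  destruct (Nat.eq_dec k N).
  - subst. lra.
  - assert (f k <= rsum N f) by (apply IHN; [intros; apply H; lia | lia]).
    assert (0 <= f N) by (apply H; lia). lra.
Qed.

Lemma pole N lam theta th k : (k < N)%nat -> (forall j, (j < N)%nat -> 0 < lam j) ->
  cos (th - theta k) = 1 -> ~ phi_is N lam theta th 0.
Proof.
  intros Hk Hl Hc H. unfold phi_is in H.
  apply filterlim_locally with (eps := mkposreal (lam k) (Hl k Hk)) in H.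
  assert (H2 : at_left 1 (fun r => 0 < r < 1)).
  { exists (mkposreal 1 Rlt_0_1). intros y Hy Hlt. simpl in Hy.
    change (Rabs (y - 1) < 1) in Hy. apply Rabs_def2 in Hy. lra. }
  destruct (Hierarchy.filter_ex _ (filter_and _ _ H H2)) as [r [Hb Hr]].
  rewrite expr_eq in Hb.
  2:{ intros j Hj. apply Rgt_not_eq, Dn_pos. lra. }
  destruct Hb as [_ Hb]. simpl in Hb. change (Rabs (Bf N lam theta th r - 0) < lam k) in Hb.
  assert (Hge : lam k * ((1 - r * r) / Dn r (th - theta k)) <= Bf N lam theta th r).
  { unfold Bf. apply (rsum_ge_term N (fun j => lam j * ((1 - r * r) / Dn r (th - theta j)))); auto.
    intros j Hj. apply Rmult_le_pos; [apply Rlt_le; auto|].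
    apply Rdiv_le_0_compat; [nra|]. apply Dn_pos; lra. }
  assert (Hdn : Dn r (th - theta k) = (1 - r) * (1 - r)) by (unfold Dn; rewrite Hc; ring).
  rewrite Hdn in Hge.
  assert (Hq : (1 - r * r) / ((1 - r) * (1 - r)) = (1 + r) / (1 - r)) by (field; lra).
  rewrite Hq in Hge.
  assert (1 <= (1 + r) / (1 - r)).
  { apply Rmult_le_reg_r with (1 - r); [lra|]. unfold Rdiv. rewrite Rmult_assoc, Rinv_l; lra. }
  assert (lam k <= lam k * ((1 + r) / (1 - r))).
  { pose proof (Hl k Hk). nra. }
  apply Rabs_def2 in Hb. lra.
Qed.


Module K.
From mathcomp Require Import all_boot all_algebra.
From mathcomp Require Import Rstruct complex.
From mathcomp Require Import ring lra zify.
Import GRing.Theory Num.Theory.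
Local Open Scope ring_scope.
Local Open Scope complex_scope.

Definition ex (a : R) : R[i] := (cos a +i* sin a)%C.

Lemma exD a b : ex (a + b)%R = ex a * ex b.
Proof.
  rewrite /ex; simpc. rewrite cosD sinD. congr Complex. by rewrite addrC.
Qed.

Lemma ex0 : ex 0%R = 1.
Proof. by rewrite /ex cos_0 sin_0. Qed.

Lemma ex_neq0 a : ex a != 0.
Proof.
  apply/negP => /eqP H. case: H => Hc Hs. exact: (cos_sin_not0 a Hc Hs).
Qed.

Lemma ex_s th a : ex (hm th a) * (ex th - ex a) = 'i * (s2 th a)%:C.
Proof.
  rewrite /ex; simpc. congr Complex.
  - exact: trig_s1.
  - exact: trig_s2.
Qed.

Lemma ex_c th a : ex (hm th a) * (ex th + ex a) = (c2 th a)%:C.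
Proof.
  rewrite /ex; simpc. congr Complex.
  - exact: trig_c1.
  - exact: trig_c2.
Qed.

Lemma ex_hmhp th a : ex (hp th a) * ex (hm th a) = 1.
Proof. by rewrite -exD addrC -RplusE hm_hp ex0. Qed.

Lemma ex_sum N (f : nat -> R) : \prod_(k < N) ex (f k) = ex (\sum_(k < N) f k).
Proof.
  elim: N => [|N IH]; first by rewrite !big_ord0 ex0.
  by rewrite !big_ord_recr /= IH exD.
Qed.

Lemma rprodE N g : rprod N g = \prod_(k < N) g k.
Proof. elim: N => [|N IH]; first by rewrite big_ord0. by rewrite big_ord_recr /= IH. Qed.

Lemma rsumE N g : rsum N g = \sum_(k < N) g k.
Proof. elim: N => [|N IH]; first by rewrite big_ord0. by rewrite big_ord_recr /= IH. Qed.

Lemma eqbE (k j : nat) : Nat.eqb k j = (k == j).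
Proof. case: (PeanoNat.Nat.eqb_spec k j) => [->|H]; first by rewrite eqxx. by apply/esym/eqP. Qed.

Lemma rprod_exclE N g (j : 'I_N) :
  rprod N (fun k => if Nat.eqb k j then 1%R else g k) = \prod_(k < N | k != j) g k.
Proof.
  rewrite rprodE [RHS]big_mkcond /=. apply: eq_bigr => k _.
  by rewrite eqbE -val_eqE /=; case: (k == j :> nat).
Qed.

Lemma size_ordE N : size (index_enum 'I_N) = N.
Proof. by rewrite -[RHS]card_ord cardE enumT. Qed.

Definition mj {N} (theta : nat -> R) (j : 'I_N) : {poly R[i]} :=
  ('X + (ex (theta j))%:P) * \prod_(k < N | k != j) ('X - (ex (theta k))%:P).

Definition Qp N (lam theta : nat -> R) : {poly R[i]} :=
  - \sum_(j < N) ((lam j)%:C)%:P * mj theta j.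

Lemma mj_monic N theta (j : 'I_N) : mj theta j \is monic.
Proof. by rewrite /mj monicMl ?monicXaddC // monic_prod_XsubC. Qed.

Lemma mj_size N theta (j : 'I_N) : size (mj theta j) = N.+1.
Proof.
  have E : ('X - (ex (theta j))%:P) * mj theta j =
           ('X + (ex (theta j))%:P) * \prod_(k < N) ('X - (ex (theta k))%:P).
  { by rewrite /mj [in RHS](bigD1 j) //= mulrCA. }
  have H1 : size (('X - (ex (theta j))%:P) * mj theta j) = (size (mj theta j)).+1.
  { by rewrite size_monicM ?monicXsubC ?monic_neq0 ?mj_monic // size_XsubC. }
  have H2 : size (('X + (ex (theta j))%:P) * \prod_(k < N) ('X - (ex (theta k))%:P)) = N.+2.
  { by rewrite size_monicM ?monicXaddC ?monic_neq0 ?monic_prod_XsubC // size_XaddC size_prod_XsubC size_ordE. }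
  by move: H1; rewrite E H2 => [[]].
Qed.

Lemma rC3 (a b c : R) : ((a * b * c)%R)%:C = a%:C * b%:C * c%:C.
Proof. by rewrite !rmorphM. Qed.

Lemma Qp_eval N (lam theta : nat -> R) (th : R) :
  (\prod_(k < N) ex (hm th (theta k))) * (Qp N lam theta).[ex th] =
  'i ^+ N.-1 * (Pf N lam theta th)%:C.
Proof.
  rewrite /Qp /Pf rsumE hornerN horner_sum mulrN mulr_sumr RoppE rmorphN rmorph_sum mulrN mulr_sumr.
  congr (- _). apply: eq_bigr => j _.
  rewrite rprod_exclE hornerCM /mj hornerM hornerD hornerX hornerC horner_prod.
  have -> : \prod_(i < N | i != j) ('X - (ex (theta i))%:P).[ex th] =
            \prod_(i < N | i != j) (ex th - ex (theta i)).
  { by apply: eq_bigr => k _; rewrite hornerXsubC. }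
  rewrite (bigD1 j) //=.
  have Hs : \prod_(k < N | k != j) ex (hm th (theta k)) * \prod_(k < N | k != j) (ex th - ex (theta k))
      = 'i ^+ N.-1 * (\prod_(k < N | k != j) s2 th (theta k))%:C.
  { rewrite -big_split /= (eq_bigr _ (fun (k : 'I_N) _ => ex_s th (theta k))) big_split /= prodr_const rmorph_prod.
    by rewrite cardC1 card_ord. }
  rewrite rC3 -ex_c.
  transitivity ((lam j)%:C * (ex (hm th (theta j)) * (ex th + ex (theta j))) *
    (\prod_(k < N | k != j) ex (hm th (theta k)) * \prod_(k < N | k != j) (ex th - ex (theta k)))).
  { ring. }
  rewrite Hs. ring.
Qed.

Lemma Pm_eval N (mu : nat -> R) th :
  \prod_(k < N) (ex (hm th (mu k)) * (ex th - ex (mu k))) = 'i ^+ N * (Pm N mu th)%:C.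
Proof.
  rewrite (eq_bigr _ (fun (k : 'I_N) _ => ex_s th (mu k))) big_split /= prodr_const card_ord.
  by rewrite /Pm rprodE rmorph_prod.
Qed.

Lemma Qp_size N lam theta : (size (Qp N lam theta) <= N.+1)%N.
Proof.
  rewrite /Qp size_polyN. apply: (big_ind (fun p : {poly R[i]} => size p <= N.+1)%N).
  - by rewrite size_poly0.
  - move=> p q Hp Hq. apply: leq_trans (size_polyD _ _) _. by rewrite geq_max Hp Hq.
  - move=> j _. apply: leq_trans (size_polyMleq _ _) _. rewrite mj_size.
    have := size_polyC_leq1 ((lam j)%:C). case: (size _) => [_|[_|k]]; rewrite ?add0n ?add1n /= ?leqnSn //.
Qed.

Lemma Qp_coef N lam theta : (Qp N lam theta)`_N = - (\sum_(j < N) (lam j)%:C).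
Proof.
  rewrite /Qp coefN coef_sum. congr (- _). apply: eq_bigr => j _.
  rewrite coefCM. have := mj_monic _ theta j. move/monicP. rewrite lead_coefE mj_size /= => ->.
  by rewrite mulr1.
Qed.

Lemma leq_coef0 (p : {poly R[i]}) n : (size p <= n.+1)%N -> p`_n = 0 -> (size p <= n)%N.
Proof.
  rewrite leq_eqVlt => /orP [/eqP Hs|//] Hc.
  have : lead_coef p = 0 by rewrite lead_coefE Hs.
  move/eqP; rewrite lead_coef_eq0 => /eqP ->. by rewrite size_poly0.
Qed.

Lemma prodX_size N (mu : nat -> R) : size (\prod_(k < N) ('X - (ex (mu k))%:P)) = N.+1.
Proof. by rewrite size_prod_XsubC size_ordE. Qed.

Lemma prodX_coef N (mu : nat -> R) : (\prod_(k < N) ('X - (ex (mu k))%:P))`_N = 1.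
Proof.
  have := monic_prod_XsubC (index_enum 'I_N) xpredT (fun k : 'I_N => ex (mu k)).
  by move/monicP; rewrite lead_coefE prodX_size.
Qed.

Lemma prodE_neq0 N (f : nat -> R) : \prod_(k < N) ex (f k) != 0.
Proof. by apply/prodf_neq0 => k _; apply: ex_neq0. Qed.

Lemma key N (lam theta mu : nat -> R) (t : R) :
  (0 < N)%coq_nat -> t = rsum N lam ->
  (forall i j, (i < N)%coq_nat -> (j < N)%coq_nat -> cos (mu i) = cos (mu j) ->
      sin (mu i) = sin (mu j) -> i = j) ->
  (forall j, (j < N)%coq_nat -> Pf N lam theta (mu j) = 0%R) ->
  forall th, Pf N lam theta th = (t * sin (rsum N (fun k => hd (mu k) (theta k))) * Pm N mu th)%R /\
             (t * cos (rsum N (fun k => hd (mu k) (theta k))) * Pm N mu th)%R = 0%R.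
Proof.
  move=> HN' Ht Hinj Hz th.
  have HN : (0 < N)%N by apply/ltP.
  set Rp := Qp N lam theta + ((t%:C)%:P * \prod_(k < N) ('X - (ex (mu k))%:P)).
  have HtC : t%:C = \sum_(j < N) (lam j)%:C by rewrite Ht rsumE rmorph_sum.
  have HsR : (size Rp <= N)%N.
  { apply: leq_coef0.
    - apply: leq_trans (size_polyD _ _) _. rewrite geq_max Qp_size /=.
      apply: leq_trans (size_polyMleq _ _) _. rewrite prodX_size.
      have := size_polyC_leq1 (t%:C). case: (size _) => [_|[_|k]]; rewrite ?add0n ?add1n /= ?leqnSn //.
    - by rewrite coefD Qp_coef coefCM prodX_coef mulr1 HtC addNr. }
  have Hroot : forall i : 'I_N, root Rp (ex (mu i)).
  { move=> i. rewrite /root /Rp hornerD hornerCM horner_prod (bigD1 i) //= hornerXsubC subrr mul0r mulr0 addr0.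
    have := Qp_eval N lam theta (mu i). rewrite Hz; last by apply/ltP.
    rewrite rmorph0 mulr0 => /eqP. by rewrite mulf_eq0 (negbTE (prodE_neq0 N (fun k => hm (mu i) (theta k)))). }
  have Huniq : uniq (map (fun i : 'I_N => ex (mu i)) (enum 'I_N)).
  { rewrite map_inj_uniq ?enum_uniq // => i j E. case: E => Hc Hs. apply: ord_inj.
    by apply: Hinj => //; apply/ltP. }
  have HR0 : Rp = 0.
  { apply/eqP; apply: contraT => Hn.
    have := max_poly_roots Hn _ Huniq. rewrite size_map size_enum_ord.
    have -> : all (root Rp) (map (fun i : 'I_N => ex (mu i)) (enum 'I_N)).
    { apply/allP => z /mapP [i _ ->]. exact: Hroot. }
    move=> /(_ isT) H. move: (leq_trans H HsR). by rewrite ltnn. }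
  have HQ : Qp N lam theta = - ((t%:C)%:P * \prod_(k < N) ('X - (ex (mu k))%:P)).
  { apply/eqP; rewrite -addr_eq0; apply/eqP; exact: HR0. }
  have E1 := Qp_eval N lam theta th.
  rewrite HQ hornerN hornerCM horner_prod in E1.
  have Hp : \prod_(k < N) ('X - (ex (mu k))%:P).[ex th] =
            \prod_(k < N) ex (hp th (mu k)) * ('i ^+ N * (Pm N mu th)%:C).
  { rewrite -Pm_eval -big_split /=. apply: eq_bigr => k _. by rewrite hornerXsubC mulrA ex_hmhp mul1r. }
  rewrite Hp in E1.
  have HS : \prod_(k < N) ex (hm th (theta k)) * \prod_(k < N) ex (hp th (mu k)) =
            ex (rsum N (fun k => hd (mu k) (theta k))).
  { rewrite -big_split /= rsumE -(ex_sum N (fun k => hd (mu k) (theta k))). apply: eq_bigr => k _. by rewrite -exD -RplusE hm_hp2. }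
  set S := rsum N (fun k => hd (mu k) (theta k)) in HS *.
  have Hi : 'i ^+ N = 'i ^+ N.-1 * 'i :> R[i] by rewrite -exprSr prednK.
  have Hi0 : ('i : R[i]) != 0 by apply/eqP => [[]] /eqP; rewrite oner_eq0.
  have E2 : 'i ^+ N.-1 * (Pf N lam theta th)%:C = 'i ^+ N.-1 * (- (t%:C * ex S * 'i * (Pm N mu th)%:C)).
  { rewrite -E1.
    transitivity (- (t%:C * (\prod_(k < N) ex (hm th (theta k)) * \prod_(k < N) ex (hp th (mu k))) *
                  ('i ^+ N * (Pm N mu th)%:C))); first by ring.
    rewrite HS Hi. ring. }
  have E3 := mulfI (expf_neq0 N.-1 Hi0) E2.
  have E4 : - (t%:C * ex S * 'i * (Pm N mu th)%:C) =
            (t * sin S * Pm N mu th) +i* (- (t * cos S * Pm N mu th)).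
  { rewrite /ex -!complexr0. simpc. congr Complex; ring. }
  rewrite E4 in E3. case: E3 => H1 H2. split; first exact: H1.
  move/eqP: H2. rewrite eq_sym oppr_eq0 => /eqP. done.
Qed.

End K.

Open Scope R_scope.

Lemma np_of_cexp th a : cexp (Ci * RtoC th)%C <> cexp (Ci * RtoC a)%C -> cos (th - a) <> 1.
Proof.
  rewrite !cexp_i. intros Hne Hc. apply Hne. rewrite cos_minus in Hc.
  pose proof (sin2_cos2 th) as H. pose proof (sin2_cos2 a) as H0. unfold Rsqr in *.
  assert (E : (cos th - cos a) * (cos th - cos a) + (sin th - sin a) * (sin th - sin a) = 0).
  { transitivity (sin th * sin th + cos th * cos th + (sin a * sin a + cos a * cos a)
       - 2 * (cos th * cos a + sin th * sin a)); [ring | rewrite H, H0, Hc; ring]. }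
  assert (cos th - cos a = 0) by exact (Rplus_sqr_eq_0_l _ _ E).
  assert (sin th - sin a = 0).
  { apply (Rplus_sqr_eq_0_l (sin th - sin a) (cos th - cos a)). unfold Rsqr. lra. }
  f_equal; lra.
Qed.

Lemma half_sin_cos x : cos x = 1 - 2 * sin (x / 2) * sin (x / 2) /\ sin x = 2 * sin (x / 2) * cos (x / 2).
Proof.
  pose proof (cos_2a_sin (x / 2)) as H1. pose proof (sin_2a (x / 2)) as H2.
  replace (2 * (x / 2)) with x in H1, H2 by field.
  rewrite H1, H2. split; ring.
Qed.

Lemma s2_ne0 th a : cos (th - a) <> 1 -> s2 th a <> 0.
Proof.
  intros Hc Hs. unfold s2 in Hs. destruct (half_sin_cos (th - a)) as [E _].
  assert (sin ((th - a) / 2) = 0) by lra. rewrite H in E. apply Hc. rewrite E. ring.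
Qed.

Lemma rprod_ne0 N g : (forall j, (j < N)%nat -> g j <> 0) -> rprod N g <> 0.
Proof.
  induction N; intros H; simpl; [lra|]. apply Rmult_integral_contrapositive_currified.
  - apply IHN. intros; apply H; lia.
  - apply H; lia.
Qed.

Lemma rprod_ext N f g : (forall j, (j < N)%nat -> f j = g j) -> rprod N f = rprod N g.
Proof. induction N; intros H; simpl; [reflexivity|]. rewrite IHN, H; auto. Qed.

Lemma excl_mul N g j : (j < N)%nat ->
  rprod N (fun k => if Nat.eqb k j then 1 else g k) * g j = rprod N g.
Proof.
  induction N; intros Hj; [lia|]. simpl.
  destruct (Nat.eq_dec j N) as [->|Hne].
  - rewrite Nat.eqb_refl.
    rewrite (rprod_ext N _ g); [ring|].
    intros k Hk. destruct (Nat.eqb_spec k N); [lia|reflexivity].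
  - destruct (Nat.eqb_spec N j); [lia|].
    rewrite <- IHN by lia. ring.
Qed.

Lemma rsum_div N f c : rsum N (fun j => f j / c) = rsum N f / c.
Proof. induction N; simpl. unfold Rdiv; ring. rewrite IHN. unfold Rdiv; ring. Qed.

Lemma rsum_opp N f : rsum N (fun j => - f j) = - rsum N f.
Proof. induction N; simpl. ring. rewrite IHN. ring. Qed.

Definition Pth N (theta : nat -> R) th := rprod N (fun j => s2 th (theta j)).

Lemma Af_Pf N lam theta th : (forall j, (j < N)%nat -> cos (th - theta j) <> 1) ->
  Af N lam theta th 1 = Pf N lam theta th / Pth N theta th.
Proof.
  intros Hnp.
  assert (HP : Pth N theta th <> 0) by (apply rprod_ne0; intros; apply s2_ne0; auto).
  unfold Af, Pf. rewrite <- rsum_opp.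
  replace (- rsum N (fun j => lam j * c2 th (theta j) *
        rprod N (fun k => if Nat.eqb k j then 1 else s2 th (theta k))) / Pth N theta th)
    with (rsum N (fun j => - (lam j * c2 th (theta j) *
        rprod N (fun k => if Nat.eqb k j then 1 else s2 th (theta k))) / Pth N theta th))
    by (rewrite rsum_div, rsum_opp; reflexivity).
  apply rsum_ext. intros j Hj.
  pose proof (excl_mul N (fun k => s2 th (theta k)) j Hj) as E. fold (Pth N theta th) in E.
  rewrite <- E.
  assert (Hs : s2 th (theta j) <> 0) by (apply s2_ne0; auto).
  assert (Hx : rprod N (fun k => if Nat.eqb k j then 1 else s2 th (theta k)) <> 0).
  { intro H0. apply HP. rewrite <- E, H0. ring. }
  destruct (half_sin_cos (th - theta j)) as [Ec Es].
  unfold Dn. rewrite Ec, Es. unfold s2, c2 in *.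
  assert (sin ((th - theta j) / 2) <> 0) by (intro; apply Hs; rewrite H; ring).
  field. split; auto. split; auto.
  intro H0. apply H. nra.
Qed.

Lemma sin_window_zero y : - PI < y < PI -> sin y = 0 -> y = 0.
Proof.
  intros [H1 H2] Hs. destruct (Rtotal_order y 0) as [Hl|[He|Hg]]; auto.
  - assert (0 < sin (- y)) by (apply sin_gt_0; lra). rewrite sin_neg in H. lra.
  - assert (0 < sin y) by (apply sin_gt_0; lra). lra.
Qed.

Lemma rprod_zero N g i : (i < N)%nat -> g i = 0 -> rprod N g = 0.
Proof.
  induction N; intros Hi Hg; [lia|]. simpl.
  destruct (Nat.eq_dec i N) as [->|Hne]; [rewrite Hg; ring|].
  rewrite IHN; [ring|lia|auto].
Qed.

Lemma rsum_single N f : (0 < N)%nat -> (forall j, (j < N)%nat -> j <> 0%nat -> f j = 0) -> rsum N f = f 0%nat.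
Proof.
  induction N; intros HN H; [lia|]. simpl.
  destruct (Nat.eq_dec N 0) as [->|Hne]; [simpl; ring|].
  rewrite IHN by (try lia; intros; apply H; lia). rewrite (H N); [ring|lia|lia].
Qed.

Lemma sign_prod N g : (forall j, (j < N)%nat -> g j < 0) -> 0 < (-1) ^ N * rprod N g.
Proof.
  induction N; intros H; simpl; [lra|].
  assert (0 < (-1) ^ N * rprod N g) by (apply IHN; intros; apply H; lia).
  assert (g N < 0) by (apply H; lia).
  replace (-1 * (-1) ^ N * (rprod N g * g N)) with (((-1) ^ N * rprod N g) * (- g N)) by ring.
  apply Rmult_lt_0_compat; lra.
Qed.

Lemma sign_excl0 n g : (forall k, (1 <= k <= n)%nat -> g k < 0) ->
  0 < (-1) ^ n * rprod (S n) (fun k => if Nat.eqb k 0 then 1 else g k).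
Proof.
  induction n; intros H; simpl; [lra|].
  assert (0 < (-1) ^ n * rprod (S n) (fun k => if Nat.eqb k 0 then 1 else g k))
    by (apply IHn; intros; apply H; lia).
  assert (g (S n) < 0) by (apply H; lia).
  simpl in H0.
  replace (-1 * (-1) ^ n * (rprod n (fun k => if Nat.eqb k 0 then 1 else g k) *
     (if Nat.eqb n 0 then 1 else g n) * g (S n)))
    with (((-1) ^ n * (rprod n (fun k => if Nat.eqb k 0 then 1 else g k) *
     (if Nat.eqb n 0 then 1 else g n))) * (- g (S n))) by ring.
  apply Rmult_lt_0_compat; lra.
Qed.

Lemma rprod_s2 N th g : rprod N (fun j => s2 th (g j)) = 2 ^ N * rprod N (fun j => sin ((th - g j) / 2)).
Proof. induction N; simpl; [ring|]. rewrite IHN. unfold s2. ring. Qed.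

Lemma phi_unique N lam theta th v w : phi_is N lam theta th v -> phi_is N lam theta th w -> v = w.
Proof.
  unfold phi_is. intros H1 H2.
  assert (E := filterlim_locally_unique (F := at_left 1) _ _ _ H1 H2).
  injection E. auto.
Qed.

Lemma rsum_zero N : rsum N (fun _ => 0) = 0.
Proof. induction N; simpl; [ring|]. rewrite IHN; ring. Qed.

Lemma sum_lam_t N (lam theta : nat -> R) (f : CC -> CC) t :
  (forall z : CC, Cmod z < 1 -> f z = cexp (logf N lam theta z)) ->
  f (RtoC 0) = RtoC (exp (- t)) -> t = rsum N lam.
Proof.
  intros Hf Hf0.
  assert (HL := expr_eq N lam theta 0 0).
  assert (Hz : (RtoC 0 * cexp (Ci * RtoC 0))%C = RtoC 0).
  { rewrite cexp_i. unfold Cmult, RtoC; simpl. f_equal; ring. }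
  rewrite Hz in HL.
  assert (HA : Af N lam theta 0 0 = 0).
  { unfold Af. rewrite (rsum_ext N _ (fun _ => 0)); [rewrite rsum_zero; ring|].
    intros j Hj. unfold Rdiv. ring. }
  assert (HB : Bf N lam theta 0 0 = rsum N lam).
  { unfold Bf. apply rsum_ext. intros j Hj. unfold Dn.
    replace (1 - 2 * 0 * cos (0 - theta j) + 0 * 0) with 1 by ring. field. }
  rewrite HA, HB in HL.
  specialize (HL ltac:(intros j Hj; unfold Dn; lra)).
  assert (H0 : Cmod (RtoC 0) < 1) by (rewrite Cmod_R, Rabs_R0; lra).
  rewrite (Hf _ H0) in Hf0.
  destruct (logf N lam theta (RtoC 0)) as [a b] eqn:EL.
  unfold Cminus, Cplus, Copp, Cmult, Ci, RtoC in HL; simpl in HL.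
  injection HL as HL1 HL2.
  unfold cexp, RtoC in Hf0; simpl in Hf0. injection Hf0 as Hf1 Hf2.
  assert (Hb : b = 0) by lra. assert (Ha : a = - rsum N lam) by lra.
  rewrite Hb, cos_0, Rmult_1_r in Hf1. apply exp_inv in Hf1. lra.
Qed.

Theorem corollary6 (n : nat) (f : CC -> CC) (t : R)
    (N : nat) (lam theta mu : nat -> R) :
  extremal n f ->
  0 < t ->
  f (RtoC 0) = RtoC (exp (- t)) ->
  (1 <= N)%nat ->
  (N <= n)%nat ->
  (forall j, (j < N)%nat -> 0 < lam j) ->
  (forall i j, (i < N)%nat -> (j < N)%nat -> i <> j -> alpha theta i <> alpha theta j) ->
  (forall z : CC, Cmod z < 1 -> f z = cexp (logf N lam theta z)) ->
  (forall j, (j < N)%nat -> theta 0%nat <= theta j < theta 0%nat + 2 * PI) ->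
  (forall j, (j < N)%nat -> theta 0%nat <= mu j < theta 0%nat + 2 * PI) ->
  (forall j, (j < N)%nat -> phi_is N lam theta (mu j) 0) ->
  (forall i j, (i < N)%nat -> (j < N)%nat -> mu i = mu j -> i = j) ->
  (forall th, theta 0%nat <= th < theta 0%nat + 2 * PI -> phi_is N lam theta th 0 ->
     exists j, (j < N)%nat /\ th = mu j) ->
  forall th : R,
    (forall j, (j < N)%nat -> cexp (Ci * RtoC th) <> cexp (Ci * RtoC (theta j))) ->
    phi_is N lam theta th
      (t * rprod N (fun j => sin ((th - mu j) / 2))
         / rprod N (fun j => sin ((th - theta j) / 2))).
Proof.
  intros _ Ht Hf0 HN1 _ Hlam Halpha Hf Hthw Hmuw Hmuz Hmuinj _ th Hth.
  assert (Hsum : t = rsum N lam) by exact (sum_lam_t N lam theta f t Hf Hf0).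
  assert (Hmunp : forall j, (j < N)%nat -> forall k, (k < N)%nat -> cos (mu j - theta k) <> 1).
  { intros j Hj k Hk Hc. exact (pole N lam theta (mu j) k Hk Hlam Hc (Hmuz j Hj)). }
  assert (HPz : forall j, (j < N)%nat -> Pf N lam theta (mu j) = 0).
  { intros j Hj. pose proof (lim_nonpole N lam theta (mu j) (Hmunp j Hj)) as H1.
    pose proof (phi_unique _ _ _ _ _ _ H1 (Hmuz j Hj)) as E.
    rewrite Af_Pf in E by (apply Hmunp; auto).
    assert (HP : Pth N theta (mu j) <> 0) by (apply rprod_ne0; intros; apply s2_ne0; auto).
    unfold Rdiv in E. apply Rmult_integral in E. destruct E as [E|E]; auto.
    exfalso. exact (Rinv_neq_0_compat _ HP E). }
  assert (Hinj : forall i j, (i < N)%nat -> (j < N)%nat -> cos (mu i) = cos (mu j) ->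
             sin (mu i) = sin (mu j) -> i = j).
  { intros i j Hi Hj Hc Hs. apply Hmuinj; auto.
    assert (Hc1 : cos (mu i - mu j) = 1).
    { rewrite cos_minus, Hc, Hs. pose proof (sin2_cos2 (mu j)) as H. unfold Rsqr in H. lra. }
    destruct (half_sin_cos (mu i - mu j)) as [Ec _].
    assert (Hs0 : sin ((mu i - mu j) / 2) = 0).
    { assert (sin ((mu i - mu j) / 2) * sin ((mu i - mu j) / 2) = 0) by lra.
      apply Rmult_integral in H. destruct H; auto. }
    apply sin_window_zero in Hs0; [lra|].
    specialize (Hmuw i Hi) as Hwi. specialize (Hmuw j Hj) as Hwj. split; lra. }
  pose proof (K.key N lam theta mu t HN1 Hsum Hinj HPz) as Hkey.
  set (SS := rsum N (fun k => hd (mu k) (theta k))) in Hkey.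
  assert (HPm : 0 < (-1) ^ N * Pm N mu (theta 0%nat)).
  { apply sign_prod. intros j Hj. unfold s2.
    assert (Hne : mu j <> theta 0%nat).
    { intro E. apply (Hmunp j Hj 0%nat ltac:(lia)). rewrite E, Rminus_diag. apply cos_0. }
    specialize (Hmuw j Hj).
    assert (sin ((theta 0%nat - mu j) / 2) < 0) by (apply sin_lt_0_var; lra). lra. }
  assert (HPf : 0 < (-1) ^ N * Pf N lam theta (theta 0%nat)).
  { unfold Pf. rewrite rsum_single; [ | lia | ].
    2:{ intros j Hj Hj0. rewrite (rprod_zero N _ 0%nat); [ring|lia|].
        destruct (Nat.eqb_spec 0 j); [lia|]. unfold s2. rewrite Rminus_diag.
        replace (0 / 2) with 0 by field. rewrite sin_0. ring. }
    destruct N as [|m]; [lia|].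
    assert (Hg : forall k, (1 <= k <= m)%nat -> s2 (theta 0%nat) (theta k) < 0).
    { intros k Hk. unfold s2.
      assert (Hne : theta k <> theta 0%nat).
      { intro E. apply (Halpha k 0%nat); try lia. unfold alpha. rewrite E. reflexivity. }
      specialize (Hthw k ltac:(lia)).
      assert (sin ((theta 0%nat - theta k) / 2) < 0) by (apply sin_lt_0_var; lra). lra. }
    pose proof (sign_excl0 m (fun k => s2 (theta 0%nat) (theta k)) Hg) as Hs.
    unfold c2. rewrite Rminus_diag. replace (0 / 2) with 0 by field. rewrite cos_0.
    assert (Hl0 := Hlam 0%nat ltac:(lia)).
    replace ((-1) ^ S m * - (lam 0%nat * (2 * 1) *
       rprod (S m) (fun k => if Nat.eqb k 0 then 1 else s2 (theta 0%nat) (theta k))))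
      with (2 * lam 0%nat * ((-1) ^ m * rprod (S m) (fun k => if Nat.eqb k 0 then 1 else s2 (theta 0%nat) (theta k))))
      by (simpl; ring).
    apply Rmult_lt_0_compat; [lra|]. exact Hs. }
  destruct (Hkey (theta 0%nat)) as [E1 E2].
  assert (HPm0 : Pm N mu (theta 0%nat) <> 0).
  { intro H0. rewrite H0, Rmult_0_r in HPm. lra. }
  assert (HcS : cos SS = 0).
  { apply Rmult_integral in E2. destruct E2 as [E2|E2]; [|contradiction].
    apply Rmult_integral in E2. destruct E2 as [E2|E2]; [lra|auto]. }
  assert (HsS : sin SS = 1).
  { pose proof (sin2_cos2 SS) as H. rewrite HcS in H. unfold Rsqr in H.
    rewrite E1 in HPf.
    assert (Hpos : 0 < t * sin SS * ((-1) ^ N * Pm N mu (theta 0%nat))).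
    { replace (t * sin SS * ((-1) ^ N * Pm N mu (theta 0%nat)))
        with ((-1) ^ N * (t * sin SS * Pm N mu (theta 0%nat))) by ring. exact HPf. }
    assert (0 < sin SS).
    { destruct (Rle_or_lt (sin SS) 0) as [Hle|Hlt]; auto.
      exfalso. assert (t * sin SS <= 0) by nra. nra. }
    nra. }
  assert (Hnp : forall j, (j < N)%nat -> cos (th - theta j) <> 1).
  { intros j Hj. apply np_of_cexp. apply Hth; auto. }
  pose proof (lim_nonpole N lam theta th Hnp) as Hlim.
  rewrite Af_Pf in Hlim by auto.
  destruct (Hkey th) as [E3 _]. rewrite E3, HsS in Hlim.
  assert (HP : Pth N theta th <> 0) by (apply rprod_ne0; intros; apply s2_ne0; auto).
  unfold Pm, Pth in Hlim, HP. rewrite !rprod_s2 in Hlim. rewrite rprod_s2 in HP.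
  assert (H2 : 2 ^ N <> 0) by (apply pow_nonzero; lra).
  assert (HB : rprod N (fun j => sin ((th - theta j) / 2)) <> 0).
  { intro H0. apply HP. rewrite H0. ring. }
  replace (t * rprod N (fun j => sin ((th - mu j) / 2)) / rprod N (fun j => sin ((th - theta j) / 2)))
    with (t * 1 * (2 ^ N * rprod N (fun j => sin ((th - mu j) / 2))) /
          (2 ^ N * rprod N (fun j => sin ((th - theta j) / 2)))) by (field; auto).
  exact Hlim.
Qed.
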